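(* Consider the ship dynamics $$M\dot\nu(t) + D(\nu(t))\nu(t) + C(\nu(t))\nu(t) = \tau(t) + \tau_d(t), \qquad \nu=[u,v,r]^\top\in\mathbb{R}^3,$$ with $M$, $D$, $C$, $\kappa_{ij}$, $\sigma$, $\Gamma=\mathrm{diag}(\Gamma_1,\Gamma_2,\Gamma_3)$ and $T$ as described in the context, and assume $\kappa_{23}\kappa_{32}<\kappa_{22}\kappa_{33}$ (so $\sigma>0$) and $\Gamma_1,\Gamma_2,\Gamma_3>0$. Run the disturbance observer $$\hat\tau_d(t) = \zeta(t) + T\nu(t),\qquad \dot\zeta(t) = -T M^{-1}\big(\tau(t) + \hat\tau_d(t) - D(\nu(t))\nu(t) - C(\nu(t))\nu(t)\big),$$ along a solution $(\nu,\zeta)$ defined for $t\ge0$. Suppose the disturbance $\tau_d$ is continuously differentiable (not necessarily constant) with $\|\dot\tau_d(t)\|\le\theta$ for all $t\ge0$, and suppose $\lambda_{\min}(\Gamma)\sigma>\tfrac12$, where $\lambda_{\min}(\Gamma)=\min(\Gamma_1,\Gamma_2,\Gamma_3)$. Then the estimation error $z(t)=\tau_d(t)-\hat\tau_d(t)$ converges exponentially into the closed ball centered at the origin with radius $$r_b=\frac{\theta}{\sqrt{2\lambda_{\min}(\Gamma)\sigma-1}};$$ precisely, with $a=2\lambda_{\min}(\Gamma)\sigma-1>0$, for all $t\ge 0$, $$\|z(t)\|^2\le e^{-at}\|z(0)\|^2 + r_b^2\big(1-e^{-at}\big).$$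
   Context: $\nu=[u,v,r]^\top$ are the surge, sway and yaw-rate velocities of the ship, $\tau(t)\in\mathbb{R}^3$ is the control input and $\tau_d(t)\in\mathbb{R}^3$ the environmental disturbance. The mass matrix is constant, symmetric, positive definite, of the form $M=\begin{bmatrix} m_{11}&0&0\\0&m_{22}&m_{23}\\0&m_{32}&m_{33}\end{bmatrix}$ with positive entries, and its inverse is written $M^{-1}=\begin{bmatrix} \kappa_{11}&0&0\\0&\kappa_{22}&\kappa_{23}\\0&\kappa_{32}&\kappa_{33}\end{bmatrix}$. $D(\nu)$ is the nonlinear damping matrix $\begin{bmatrix} d_{11}&0&0\\0&d_{22}&d_{23}\\0&d_{32}&d_{33}\end{bmatrix}$ with $d_{11}=-X_u-X_{|u|u}-X_{uuu}u^2$, $d_{22}=-Y_v-Y_{|v|v}-Y_{|r|v}|r|-Y_{vvv}v^2$, $d_{23}=-Y_r-Y_{|v|r}|v|-Y_{|r|r}|r|$, $d_{32}=-N_v-N_{|v|v}|v|-N_{|r|v}|r|$, $d_{33}=-N_r-N_{|v|r}|v|-N_{|r|r}|r|-N_{rrr}r^2$ (real hydrodynamic constants), and $C(\nu)=\begin{bmatrix}0&0&c_{13}\\0&0&c_{23}\\-c_{13}&-c_{23}&0\end{bmatrix}$ with $c_{13}=-m_{22}v-m_{23}r$, $c_{23}=m_{11}u$. Define $\sigma = 1-\frac{\kappa_{23}\kappa_{32}}{\kappa_{22}\kappa_{33}}$, adaptive gains $\Gamma_1,\Gamma_2,\Gamma_3$, $\Gamma=\mathrm{diag}(\Gamma_1,\Gamma_2,\Gamma_3)$,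 and $$T=\begin{bmatrix}\Gamma_1\frac{\sigma}{\kappa_{11}}&0&0\\ 0&\frac{\Gamma_2}{\kappa_{22}}&-\Gamma_2\frac{\kappa_{23}}{\kappa_{22}\kappa_{33}}\\ 0&-\Gamma_3\frac{\kappa_{32}}{\kappa_{22}\kappa_{33}}&\frac{\Gamma_3}{\kappa_{33}}\end{bmatrix}.$$ $\|\cdot\|$ is the Euclidean norm. *)

(* Defs.v *)
From Stdlib Require Import Reals Lra.
From Coquelicot Require Import Coquelicot.
Open Scope R_scope.

Record hydro : Type := mkHydro {
  X_u : R; X_absu_u : R; X_uuu : R;
  Y_v : R; Y_absv_v : R; Y_absr_v : R; Y_vvv : R;
  Y_r : R; Y_absv_r : R; Y_absr_r : R;
  N_v : R; N_absv_v : R; N_absr_v : R;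
  N_r : R; N_absv_r : R; N_absr_r : R; N_rrr : R }.

Definition d11 (h : hydro) (u v r : R) : R :=
  - X_u h - X_absu_u h * Rabs u - X_uuu h * u ^ 2.
Definition d22 (h : hydro) (u v r : R) : R :=
  - Y_v h - Y_absv_v h * Rabs v - Y_absr_v h * Rabs r - Y_vvv h * v ^ 2.
Definition d23 (h : hydro) (u v r : R) : R :=
  - Y_r h - Y_absv_r h * Rabs v - Y_absr_r h * Rabs r.
Definition d32 (h : hydro) (u v r : R) : R :=
  - N_v h - N_absv_v h * Rabs v - N_absr_v h * Rabs r.
Definition d33 (h : hydro) (u v r : R) : R :=
  - N_r h - N_absv_r h * Rabs v - N_absr_r h * Rabs r - N_rrr h * r ^ 2.

Definition Dnu1 h u v r := d11 h u v r * u.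
Definition Dnu2 h u v r := d22 h u v r * v + d23 h u v r * r.
Definition Dnu3 h u v r := d32 h u v r * v + d33 h u v r * r.

Definition c13 (m11 m22 m23 : R) (u v r : R) : R := - m22 * v - m23 * r.
Definition c23 (m11 m22 m23 : R) (u v r : R) : R := m11 * u.
Definition Cnu1 m11 m22 m23 u v r := c13 m11 m22 m23 u v r * r.
Definition Cnu2 m11 m22 m23 u v r := c23 m11 m22 m23 u v r * r.
Definition Cnu3 m11 m22 m23 u v r :=
  - c13 m11 m22 m23 u v r * u - c23 m11 m22 m23 u v r * v.

Definition sigma_ship (k22 k23 k32 k33 : R) : R := 1 - (k23 * k32) / (k22 * k33).

Definition T11 (G1 k11 k22 k23 k32 k33 : R) := G1 * sigma_ship k22 k23 k32 k33 / k11.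
Definition T22 (G2 k22 : R) := G2 / k22.
Definition T23 (G2 k22 k23 k33 : R) := - G2 * k23 / (k22 * k33).
Definition T32 (G3 k22 k32 k33 : R) := - G3 * k32 / (k22 * k33).
Definition T33 (G3 k33 : R) := G3 / k33.

Definition lam_min (G1 G2 G3 : R) : R := Rmin G1 (Rmin G2 G3).

Definition nrm2 (a b c : R) : R := a ^ 2 + b ^ 2 + c ^ 2.
Definition nrm (a b c : R) : R := sqrt (nrm2 a b c).

(* Main.v *)
Require Import Defs.
From Stdlib Require Import Reals Lra Psatz.
From Coquelicot Require Import Coquelicot.
Open Scope R_scope.


Definition rc (f : R -> R) := filterlim f (at_right 0) (locally (f 0)).

Lemma rc_plus f g : rc f -> rc g -> rc (fun t => f t + g t).
Proof. intros Hf Hg. unfold rc. apply (filterlim_comp_2 f g Rplus Hf Hg).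
  exact (filterlim_plus (f 0) (g 0)). Qed.
Lemma rc_mult f g : rc f -> rc g -> rc (fun t => f t * g t).
Proof. intros Hf Hg. unfold rc. apply (filterlim_comp_2 f g Rmult Hf Hg).
  exact (filterlim_mult (f 0) (g 0)). Qed.
Lemma rc_const c : rc (fun _ => c).
Proof. apply filterlim_const. Qed.
Lemma rc_minus f g : rc f -> rc g -> rc (fun t => f t - g t).
Proof. intros Hf Hg. 
  assert (rc (fun t => f t + (-1) * g t)) by (apply rc_plus; auto; apply rc_mult; auto; apply rc_const).
  unfold rc in *. eapply filterlim_ext. 2: replace (f 0 - g 0) with (f 0 + (-1) * g 0) by ring; exact H.
  intros; simpl; ring. Qed.
Lemma rc_pow2 f : rc f -> rc (fun t => f t ^ 2).
Proof. intros Hf. assert (rc (fun t => f t * (f t * 1))) by (apply rc_mult; auto; apply rc_mult; auto; apply rc_const).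
  exact H. Qed.
Lemma rc_id : rc (fun t => t).
Proof. intros P [d Hd]. exists d. intros y Hy _. apply Hd. exact Hy. Qed.
Lemma rc_explin a : rc (fun t => exp (a * t)).
Proof. assert (H : rc (fun t => a * t)) by (apply rc_mult; [apply rc_const| apply rc_id]).
  unfold rc in *. eapply (filterlim_comp _ _ _ (fun t => a * t) exp); [exact H|].
  apply (ex_derive_continuous exp). eexists. apply is_derive_exp. Qed.

Lemma mono_lemma (W dW : R -> R) :
  (forall s, 0 < s -> is_derive W s (dW s)) -> (forall s, 0 < s -> dW s <= 0) ->
  rc W -> forall t, 0 <= t -> W t <= W 0.
Proof.
  intros HD HN Hrc.
  assert (Hst : forall s t, 0 < s -> s <= t -> W t <= W s).
  { intros s t Hs Hst. destruct (Req_dec s t) as [<-|Hne]; [lra|].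
    destruct (MVT_gen W s t dW) as [c [Hc Heq]].
    - intros x Hx. apply HD. rewrite Rmin_left in Hx; lra.
    - intros x Hx. apply continuity_pt_filterlim. apply (ex_derive_continuous (K:=R_AbsRing) (V:=R_NormedModule) W).
      eexists. apply HD. rewrite Rmin_left in Hx; lra.
    - rewrite Rmin_left in Hc by lra. assert (dW c <= 0) by (apply HN; lra).
      nra. }
  intros t Ht. destruct (Req_dec t 0) as [->|Hn]; [lra|].
  apply Rnot_lt_le. intro Hlt.
  set (eps := W t - W 0).
  assert (He : 0 < eps) by (unfold eps; lra).
  destruct (Hrc (fun y => Rabs (y - W 0) < eps)) as [d Hd].
  { exists (mkposreal eps He). intros y Hy. exact Hy. }
  set (s := Rmin (d/2) (t/2)).
  assert (Hs0 : 0 < s) by (unfold s; apply Rmin_case; generalize (cond_pos d); lra).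
  assert (Hs1 : s <= t) by (unfold s; generalize (Rmin_r (d/2) (t/2)); lra).
  assert (Hsd : s <= d/2) by (unfold s; apply Rmin_l).
  specialize (Hd s). simpl in Hd.
  assert (H1 : Rabs (W s - W 0) < eps).
  { apply Hd; [|lra]. unfold ball; simpl; unfold AbsRing_ball, abs, minus, plus, opp; simpl.
    rewrite Rabs_right; generalize (cond_pos d); lra. }
  specialize (Hst s t Hs0 Hs1).
  apply Rabs_def2 in H1. unfold eps in *. lra.
Qed.

Lemma is_derive_eq (f : R -> R) (x d1 d2 : R) : is_derive f x d1 -> d1 = d2 -> is_derive f x d2.
Proof. intros H ->; exact H. Qed.

Lemma der1 (f g h : R -> R) c t df dg dh : is_derive f t df -> is_derive g t dg -> is_derive h t dh ->
  is_derive (fun s => f s - (g s + c * h s)) t (df - (dg + c * dh)).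
Proof. intros Hf Hg Hh.
  apply (is_derive_minus f (fun s => g s + c * h s)); auto.
  apply (is_derive_plus g (fun s => c * h s)); auto. apply is_derive_scal; auto. Qed.
Lemma der2 (f g h1 h2 : R -> R) c1 c2 t df dg dh1 dh2 : is_derive f t df -> is_derive g t dg ->
  is_derive h1 t dh1 -> is_derive h2 t dh2 ->
  is_derive (fun s => f s - (g s + (c1 * h1 s + c2 * h2 s))) t (df - (dg + (c1 * dh1 + c2 * dh2))).
Proof. intros Hf Hg Hh1 Hh2.
  apply (is_derive_minus f (fun s => g s + (c1 * h1 s + c2 * h2 s))); auto.
  apply (is_derive_plus g (fun s => c1 * h1 s + c2 * h2 s)); auto.
  apply (is_derive_plus (fun s => c1 * h1 s) (fun s => c2 * h2 s)); apply is_derive_scal; auto. Qed.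
Lemma derW (e1 e2 e3 : R -> R) a c t d1 d2 d3 : is_derive e1 t d1 -> is_derive e2 t d2 -> is_derive e3 t d3 ->
  is_derive (fun s => exp (a * s) * ((e1 s ^ 2 + e2 s ^ 2 + e3 s ^ 2) - c)) t
   (exp (a * t) * (a * ((e1 t ^ 2 + e2 t ^ 2 + e3 t ^ 2) - c) + (2 * e1 t * d1 + 2 * e2 t * d2 + 2 * e3 t * d3))).
Proof. intros H1 H2 H3.
  assert (HE : is_derive (fun s => exp (a * s)) t (a * exp (a * t))).
  { eapply is_derive_ext. 2: apply (is_derive_comp exp (fun s => a * s)). intros; reflexivity.
    apply is_derive_exp. eapply is_derive_eq. apply is_derive_scal. apply (is_derive_id (K:=R_AbsRing)). unfold one; simpl. ring. }
  assert (HV : is_derive (fun s => (e1 s ^ 2 + e2 s ^ 2 + e3 s ^ 2) - c) t (2 * e1 t * d1 + 2 * e2 t * d2 + 2 * e3 t * d3)).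
  { eapply is_derive_eq.
    apply (is_derive_minus (fun s => e1 s ^ 2 + e2 s ^ 2 + e3 s ^ 2) (fun _ => c)).
    apply (is_derive_plus (fun s => e1 s ^ 2 + e2 s ^ 2) (fun s => e3 s ^ 2)).
    apply (is_derive_plus (fun s => e1 s ^ 2) (fun s => e2 s ^ 2)); apply is_derive_pow; eauto.
    apply is_derive_pow; eauto. apply is_derive_const.
    simpl. unfold minus, plus, opp, zero; simpl. ring. }
  apply (is_derive_eq _ _ _ _ (is_derive_mult _ _ t _ _ HE HV Rmult_comm)).
  unfold mult, plus; simpl. ring.
Qed.
Lemma key_ineq (a lam sig G1 G2 G3 th e1 e2 e3 d1 d2 d3 : R) : a = 2*lam*sig - 1 -> 0 < a -> 0 < sig ->
  lam <= G1 -> lam <= G2 -> lam <= G3 -> d1^2+d2^2+d3^2 <= th^2 ->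
  a*((e1^2+e2^2+e3^2) - th^2/a) + (2*e1*(d1 - sig*G1*e1) + 2*e2*(d2 - sig*G2*e2) + 2*e3*(d3 - sig*G3*e3)) <= 0.
Proof. intros Ha Ha0 Hs H1 H2 H3 Hd.
  replace (a*((e1^2+e2^2+e3^2) - th^2/a)) with (a*(e1^2+e2^2+e3^2) - th^2) by (field; lra).
  assert (0 <= sig*(G1-lam)*e1^2) by (apply Rmult_le_pos; [apply Rmult_le_pos|]; nra).
  assert (0 <= sig*(G2-lam)*e2^2) by (apply Rmult_le_pos; [apply Rmult_le_pos|]; nra).
  assert (0 <= sig*(G3-lam)*e3^2) by (apply Rmult_le_pos; [apply Rmult_le_pos|]; nra).
  assert (0 <= (e1-d1)^2) by apply pow2_ge_0. assert (0 <= (e2-d2)^2) by apply pow2_ge_0. assert (0 <= (e3-d3)^2) by apply pow2_ge_0.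
  subst a. lra.
Qed.

Lemma sq_le (x th : R) : 0 <= x -> sqrt x <= th -> x <= th ^ 2.
Proof. intros H0 H. rewrite <- (sqrt_sqrt x H0). assert (Hp := sqrt_pos x). nra. Qed.
Lemma mul_pos_nonpos (E X : R) : 0 < E -> X <= 0 -> E * X <= 0.
Proof. intros. nra. Qed.

Lemma rc_e1 f g h c : rc f -> rc g -> rc h -> rc (fun s => f s - (g s + c * h s)).
Proof. intros. apply rc_minus; auto. apply rc_plus; auto. apply rc_mult; auto. apply rc_const. Qed.
Lemma rc_e2 f g h1 h2 c1 c2 : rc f -> rc g -> rc h1 -> rc h2 ->
  rc (fun s => f s - (g s + (c1 * h1 s + c2 * h2 s))).
Proof. intros. apply rc_minus; auto. apply rc_plus; auto.
  apply rc_plus; apply rc_mult; auto; apply rc_const. Qed.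
Lemma rc_W a c e1 e2 e3 : rc e1 -> rc e2 -> rc e3 ->
  rc (fun s => exp (a * s) * ((e1 s ^ 2 + e2 s ^ 2 + e3 s ^ 2) - c)).
Proof. intros. apply rc_mult. apply rc_explin. apply rc_minus; [|apply rc_const].
  apply rc_plus; [apply rc_plus|]; apply rc_pow2; auto. Qed.

Theorem mainTheorem2
  (* mass matrix M and its inverse K = M^-1 *)
  (m11 m22 m23 m32 m33 : R)
  (k11 k22 k23 k32 k33 : R)
  (* hydrodynamic constants *)
  (h : hydro)
  (* adaptive gains and disturbance-derivative bound *)
  (G1 G2 G3 theta : R)
  (* state nu = (u,v,r), observer state zeta, control tau, disturbance tau_d and its derivative *)
  (u v r zeta1 zeta2 zeta3 ta1 ta2 ta3 td1 td2 td3 dtd1 dtd2 dtd3 : R -> R)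
  (* M symmetric, positive entries, positive definite *)
  (Hm_pos : 0 < m11 /\ 0 < m22 /\ 0 < m23 /\ 0 < m32 /\ 0 < m33)
  (Hm_sym : m23 = m32)
  (Hm_pd : forall x1 x2 x3, (x1 <> 0 \/ x2 <> 0 \/ x3 <> 0) ->
      0 < m11 * x1 ^ 2 + m22 * x2 ^ 2 + (m23 + m32) * x2 * x3 + m33 * x3 ^ 2)
  (* K is the inverse of M:  M K = I *)
  (Hinv : m11 * k11 = 1 /\
          m22 * k22 + m23 * k32 = 1 /\ m22 * k23 + m23 * k33 = 0 /\
          m32 * k22 + m33 * k32 = 0 /\ m32 * k23 + m33 * k33 = 1)
  (Hk : k23 * k32 < k22 * k33)
  (HG : 0 < G1 /\ 0 < G2 /\ 0 < G3)
  (* ship dynamics  M nu' + D(nu) nu + C(nu) nu = tau + tau_d  for t > 0 *)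
  (Hnu_der : forall t, 0 < t -> ex_derive u t /\ ex_derive v t /\ ex_derive r t)
  (Hdyn : forall t, 0 < t ->
      m11 * Derive u t + Dnu1 h (u t) (v t) (r t) + Cnu1 m11 m22 m23 (u t) (v t) (r t)
        = ta1 t + td1 t /\
      m22 * Derive v t + m23 * Derive r t + Dnu2 h (u t) (v t) (r t)
        + Cnu2 m11 m22 m23 (u t) (v t) (r t) = ta2 t + td2 t /\
      m32 * Derive v t + m33 * Derive r t + Dnu3 h (u t) (v t) (r t)
        + Cnu3 m11 m22 m23 (u t) (v t) (r t) = ta3 t + td3 t)
  (* observer  zeta' = - T M^-1 (tau + hat tau_d - D nu - C nu),
     with  hat tau_d = zeta + T nu,  for t > 0 *)
  (Hobs : forall t, 0 < t ->
      let T11' := T11 G1 k11 k22 k23 k32 k33 in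
      let T22' := T22 G2 k22 in
      let T23' := T23 G2 k22 k23 k33 in
      let T32' := T32 G3 k22 k32 k33 in
      let T33' := T33 G3 k33 in
      let e1 := zeta1 t + T11' * u t in
      let e2 := zeta2 t + (T22' * v t + T23' * r t) in
      let e3 := zeta3 t + (T32' * v t + T33' * r t) in
      let w1 := ta1 t + e1 - Dnu1 h (u t) (v t) (r t) - Cnu1 m11 m22 m23 (u t) (v t) (r t) in
      let w2 := ta2 t + e2 - Dnu2 h (u t) (v t) (r t) - Cnu2 m11 m22 m23 (u t) (v t) (r t) in
      let w3 := ta3 t + e3 - Dnu3 h (u t) (v t) (r t) - Cnu3 m11 m22 m23 (u t) (v t) (r t) in
      let p1 := k11 * w1 in
      let p2 := k22 * w2 + k23 * w3 in
      let p3 := k32 * w2 + k33 * w3 in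
      is_derive zeta1 t (- (T11' * p1)) /\
      is_derive zeta2 t (- (T22' * p2 + T23' * p3)) /\
      is_derive zeta3 t (- (T32' * p2 + T33' * p3)))
  (* solution defined for t >= 0: right-continuity at 0 *)
  (Hcont0 : filterlim u (at_right 0) (locally (u 0)) /\
            filterlim v (at_right 0) (locally (v 0)) /\
            filterlim r (at_right 0) (locally (r 0)) /\
            filterlim zeta1 (at_right 0) (locally (zeta1 0)) /\
            filterlim zeta2 (at_right 0) (locally (zeta2 0)) /\
            filterlim zeta3 (at_right 0) (locally (zeta3 0)) /\
            filterlim td1 (at_right 0) (locally (td1 0)) /\
            filterlim td2 (at_right 0) (locally (td2 0)) /\
            filterlim td3 (at_right 0) (locally (td3 0)))
  (* tau_d continuously differentiable with  ||tau_d'(t)|| <= theta *)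
  (Htd_der : forall t, 0 < t ->
      is_derive td1 t (dtd1 t) /\ is_derive td2 t (dtd2 t) /\ is_derive td3 t (dtd3 t))
  (Htd_C1 : forall t, 0 < t ->
      continuous dtd1 t /\ continuous dtd2 t /\ continuous dtd3 t)
  (Htd_bound : forall t, 0 < t -> nrm (dtd1 t) (dtd2 t) (dtd3 t) <= theta)
  (Hgain : lam_min G1 G2 G3 * sigma_ship k22 k23 k32 k33 > 1 / 2) :
  let a := 2 * lam_min G1 G2 G3 * sigma_ship k22 k23 k32 k33 - 1 in
  let rb := theta / sqrt a in
  (* estimation error z = tau_d - hat tau_d *)
  let e1 := fun t => td1 t - (zeta1 t + T11 G1 k11 k22 k23 k32 k33 * u t) in
  let e2 := fun t => td2 t - (zeta2 t + (T22 G2 k22 * v t + T23 G2 k22 k23 k33 * r t)) in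
  let e3 := fun t => td3 t - (zeta3 t + (T32 G3 k22 k32 k33 * v t + T33 G3 k33 * r t)) in
  forall t, 0 <= t ->
    nrm (e1 t) (e2 t) (e3 t) ^ 2
      <= exp (- a * t) * nrm (e1 0) (e2 0) (e3 0) ^ 2 + rb ^ 2 * (1 - exp (- a * t)).
Proof.
  intros a rb e1 e2 e3 t Ht.
  destruct Hm_pos as [Pm11 [Pm22 [Pm23 [Pm32 Pm33]]]].
  destruct Hinv as [I1 [I2 [I3 [I4 I5]]]].
  destruct HG as [PG1 [PG2 PG3]].
  set (lam := lam_min G1 G2 G3) in *.
  assert (Hl1 : lam <= G1) by (unfold lam, lam_min; apply Rmin_l).
  assert (Hl2 : lam <= G2) by (unfold lam, lam_min; eapply Rle_trans; [apply Rmin_r|apply Rmin_l]).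
  assert (Hl3 : lam <= G3) by (unfold lam, lam_min; eapply Rle_trans; [apply Rmin_r|apply Rmin_r]).
  assert (Hl0 : 0 < lam) by (unfold lam, lam_min; apply Rmin_pos; [|apply Rmin_pos]; lra).
  set (sig := sigma_ship k22 k23 k32 k33) in *.
  assert (Hsig : 0 < sig).
  { destruct (Rlt_or_le 0 sig) as [|Hn]; [auto|].
    assert (0 <= lam * (- sig)) by (apply Rmult_le_pos; lra). lra. }
  assert (Ha : 0 < a) by (unfold a; lra).
  assert (HD : forall s, 0 < s ->
     is_derive e1 s (dtd1 s - sig * G1 * e1 s) /\
     is_derive e2 s (dtd2 s - sig * G2 * e2 s) /\
     is_derive e3 s (dtd3 s - sig * G3 * e3 s)).
  { remember (m22 * m33 - m23 * m32) as Dl eqn:HDl.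
    assert (E22 : Dl * k22 = m33).
    { replace (Dl * k22) with (m33 * (m22 * k22 + m23 * k32) - m23 * (m32 * k22 + m33 * k32)) by (subst; ring).
      rewrite I2, I4; ring. }
    assert (E32 : Dl * k32 = - m32).
    { replace (Dl * k32) with (m22 * (m32 * k22 + m33 * k32) - m32 * (m22 * k22 + m23 * k32)) by (subst; ring).
      rewrite I2, I4; ring. }
    assert (E23 : Dl * k23 = - m23).
    { replace (Dl * k23) with (m33 * (m22 * k23 + m23 * k33) - m23 * (m32 * k23 + m33 * k33)) by (subst; ring).
      rewrite I3, I5; ring. }
    assert (E33 : Dl * k33 = m22).
    { replace (Dl * k33) with (m22 * (m32 * k23 + m33 * k33) - m32 * (m22 * k23 + m23 * k33)) by (subst; ring).
      rewrite I3, I5; ring. }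
    assert (HDl0 : Dl <> 0) by (intro Z; rewrite Z in E22; lra).
    assert (K22 : k22 = m33 / Dl) by (rewrite <- E22; field; auto).
    assert (K32 : k32 = - m32 / Dl) by (rewrite <- E32; field; auto).
    assert (K23 : k23 = - m23 / Dl) by (rewrite <- E23; field; auto).
    assert (K33 : k33 = m22 / Dl) by (rewrite <- E33; field; auto).
    assert (K11 : k11 = / m11) by (rewrite <- (Rmult_1_l (/ m11)), <- I1; field; lra).
    intros s Hs.
    destruct (Hnu_der s Hs) as [Hu [Hv Hr]].
    destruct (Hdyn s Hs) as [D1 [D2 D3]].
    pose proof (Hobs s Hs) as HO. cbv zeta in HO. destruct HO as [Z1 [Z2 Z3]].
    destruct (Htd_der s Hs) as [Q1 [Q2 Q3]].
    apply Derive_correct in Hu. apply Derive_correct in Hv. apply Derive_correct in Hr.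
    assert (T1 : ta1 s = m11 * Derive u s + Dnu1 h (u s) (v s) (r s) + Cnu1 m11 m22 m23 (u s) (v s) (r s) - td1 s) by lra.
    assert (T2 : ta2 s = m22 * Derive v s + m23 * Derive r s + Dnu2 h (u s) (v s) (r s) + Cnu2 m11 m22 m23 (u s) (v s) (r s) - td2 s) by lra.
    assert (T3 : ta3 s = m32 * Derive v s + m33 * Derive r s + Dnu3 h (u s) (v s) (r s) + Cnu3 m11 m22 m23 (u s) (v s) (r s) - td3 s) by lra.
    rewrite T1 in Z1. rewrite T2, T3 in Z2, Z3.
    subst sig e1 e2 e3.
    split; [|split]; eapply is_derive_eq.
    1: exact (der1 td1 zeta1 u _ s _ _ _ Q1 Z1 Hu).
    2: exact (der2 td2 zeta2 v r _ _ s _ _ _ _ Q2 Z2 Hv Hr).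
    3: exact (der2 td3 zeta3 v r _ _ s _ _ _ _ Q3 Z3 Hv Hr).
    all: clear -K11 K22 K23 K32 K33 HDl0 HDl Pm11 Pm22 Pm33.
    all: unfold T11, T22, T23, T32, T33, sigma_ship.
    all: rewrite ?K11, ?K22, ?K23, ?K32, ?K33.
    all: subst Dl; field; repeat split; try lra; auto. }
  assert (Hth : 0 <= theta).
  { eapply Rle_trans; [apply sqrt_pos|]. apply (Htd_bound 1); lra. }
  set (c := theta ^ 2 / a).
  set (W := fun s => exp (a * s) * ((e1 s ^ 2 + e2 s ^ 2 + e3 s ^ 2) - c)).
  assert (HW : W t <= W 0).
  { apply (mono_lemma W (fun s => exp (a * s) * (a * ((e1 s ^ 2 + e2 s ^ 2 + e3 s ^ 2) - c) +
       (2 * e1 s * (dtd1 s - sig * G1 * e1 s) + 2 * e2 s * (dtd2 s - sig * G2 * e2 s)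
        + 2 * e3 s * (dtd3 s - sig * G3 * e3 s))))).
    - intros s Hs. destruct (HD s Hs) as [A [B C]]. exact (derW e1 e2 e3 a c s _ _ _ A B C).
    - intros s Hs. assert (Hb := Htd_bound s Hs). unfold nrm, nrm2 in Hb.
      assert (Hb2 : dtd1 s ^ 2 + dtd2 s ^ 2 + dtd3 s ^ 2 <= theta ^ 2).
      { apply sq_le; [|exact Hb].
        assert (0 <= dtd1 s ^ 2) by apply pow2_ge_0. assert (0 <= dtd2 s ^ 2) by apply pow2_ge_0.
        assert (0 <= dtd3 s ^ 2) by apply pow2_ge_0. lra. }
      assert (Hk0 := key_ineq a lam sig G1 G2 G3 theta (e1 s) (e2 s) (e3 s) (dtd1 s) (dtd2 s) (dtd3 s)
        ltac:(reflexivity) Ha Hsig Hl1 Hl2 Hl3 Hb2).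
      fold c in Hk0.
      apply mul_pos_nonpos; [apply exp_pos|exact Hk0].
    - destruct Hcont0 as [C1 [C2 [C3 [C4 [C5 [C6 [C7 [C8 C9]]]]]]]].
      apply rc_W.
      + exact (rc_e1 td1 zeta1 u _ C7 C4 C1).
      + exact (rc_e2 td2 zeta2 v r _ _ C8 C5 C2 C3).
      + exact (rc_e2 td3 zeta3 v r _ _ C9 C6 C2 C3).
    - exact Ht. }
  assert (Hn : forall x y z, nrm x y z ^ 2 = x ^ 2 + y ^ 2 + z ^ 2).
  { intros x y z. unfold nrm. replace (sqrt (nrm2 x y z) ^ 2) with (sqrt (nrm2 x y z) * sqrt (nrm2 x y z)) by ring.
    rewrite sqrt_sqrt; [reflexivity|]. unfold nrm2.
    assert (0 <= x ^ 2) by apply pow2_ge_0. assert (0 <= y ^ 2) by apply pow2_ge_0. assert (0 <= z ^ 2) by apply pow2_ge_0. lra. }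
  rewrite !Hn.
  assert (Hrb : rb ^ 2 = c).
  { unfold rb, c. assert (Hsa := sqrt_sqrt a). assert (0 < sqrt a) by (apply sqrt_lt_R0; lra).
    replace (theta ^ 2 / a) with (theta ^ 2 / (sqrt a * sqrt a)) by (rewrite Hsa; lra). field. lra. }
  rewrite Hrb. unfold W in HW. rewrite Rmult_0_r, exp_0, Rmult_1_l in HW.
  replace (- a * t) with (- (a * t)) by ring. rewrite exp_Ropp.
  assert (He := exp_pos (a * t)).
  generalize dependent (exp (a * t)). intros E HW HE.
  assert (Hle : e1 t ^ 2 + e2 t ^ 2 + e3 t ^ 2 - c <= / E * (e1 0 ^ 2 + e2 0 ^ 2 + e3 0 ^ 2 - c)).
  { replace (e1 t ^ 2 + e2 t ^ 2 + e3 t ^ 2 - c) with (/ E * (E * (e1 t ^ 2 + e2 t ^ 2 + e3 t ^ 2 - c))) by (field; lra).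
    apply Rmult_le_compat_l; [left; apply Rinv_0_lt_compat; lra | exact HW]. }
  lra.
Qed.
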